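(* For a compact $Q\subseteq\mathbb{R}^n_\infty$, $Q$ is injective if and only if $Q=\mathcal{E}(Q)$. In addition, for every compact $X\subseteq\mathbb{R}^n_\infty$, $\mathcal{E}(X)$ is injective.
   Context: $\mathbb{R}^n_\infty$ is $\mathbb{R}^n$ with the $\ell^\infty$-metric $d_\infty$. For $X\subseteq\mathbb{R}^n_\infty$, $\mathcal{E}(X)$ (the set of $X$-minimal points) is the set of $z\in\mathbb{R}^n$ such that for every $x\in X$ there exists $y\in X$ with $d_\infty(x,z)+d_\infty(z,y)=d_\infty(x,y)$, with the metric $d_\infty$. A metric space $E$ is injective if for every isometric embedding $Y\hookrightarrow\tilde Y$ and every 1-Lipschitz $f:Y\to E$ there exists a 1-Lipschitz $\tilde f:\tilde Y\to E$ extending $f$. *)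

(* Defs.v *)
(* R^n_oo is modelled as 'rV[R]_n, whose canonical
   norm in MathComp-Analysis is mx_norm = max_i |x_i|, i.e. the l^oo norm;
   its topology is the (product = l^oo) topology of 'rV[R]_n. *)
From HB Require Import structures.
From mathcomp Require Import all_boot all_order all_algebra.
From mathcomp Require Import all_classical all_reals all_analysis.
Set Implicit Arguments. Unset Strict Implicit. Unset Printing Implicit Defensive.
Import Order.TTheory GRing.Theory Num.Theory.
Import numFieldNormedType.Exports.
Local Open Scope classical_set_scope.
Local Open Scope ring_scope.

Definition dinf {R : realType} {n : nat} (x y : 'rV[R]_n) : R := `|x - y|.

Definition is_metric {R : realType} (T : Type) (d : T -> T -> R) : Prop :=
  (forall x y, d x y = 0 <-> x = y) /\
  (forall x y, d x y = d y x) /\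
  (forall x y z, d x z <= d x y + d y z).

Definition Emin {R : realType} {n : nat} (X : set 'rV[R]_n) : set 'rV[R]_n :=
  [set z | forall x, X x -> exists y, X y /\ dinf x z + dinf z y = dinf x y].

Definition injective_space {R : realType} {n : nat} (E : set 'rV[R]_n) : Prop :=
  forall (Y Yt : Type) (dY : Y -> Y -> R) (dYt : Yt -> Yt -> R)
         (i : Y -> Yt) (f : Y -> 'rV[R]_n),
    is_metric dY -> is_metric dYt ->
    (forall a b, dYt (i a) (i b) = dY a b) ->
    (forall a, E (f a)) ->
    (forall a b, dinf (f a) (f b) <= dY a b) ->
    exists g : Yt -> 'rV[R]_n,
      (forall u, E (g u)) /\
      (forall u v, dinf (g u) (g v) <= dYt u v) /\
      (forall a, g (i a) = f a).

(* Main.v *)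
Require Import Defs.
From HB Require Import structures.
From mathcomp Require Import all_boot all_order all_algebra.
From mathcomp Require Import all_classical all_reals all_analysis.
From mathcomp Require Import lra.
Import Order.TTheory GRing.Theory Num.Theory.
Import numFieldNormedType.Exports.
Local Open Scope classical_set_scope.
Local Open Scope ring_scope.

Lemma entry_le {R : realType} {n : nat} (x : 'rV[R]_n) k : `|x ord0 k| <= `|x|.
Proof.
have -> : `|x| = mx_norm x by [].
rewrite mx_normrE; apply/bigmax_geP; right => /=; by exists (ord0, k).
Qed.

Lemma norm_le_entries {R : realType} {n : nat} (x : 'rV[R]_n) c :
  0 <= c -> (forall k, `|x ord0 k| <= c) -> `|x| <= c.
Proof.
move=> c0 H; have -> : `|x| = mx_norm x by [].
rewrite mx_normrE; apply/bigmax_leP; split => //.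
by move=> [i j] _ /=; rewrite (ord1 i).
Qed.

Lemma lip_cont {R : realType} {n : nat} (h : 'rV[R]_n -> R) k : 0 < k ->
  (forall u v, `|h u - h v| <= k * `|u - v|) -> continuous h.
Proof.
move=> k0 H x; apply/(@cvgrPdist_le _ _ _ (nbhs x) (nbhs_filter x)) => e e0.
apply/(@nbhs_normP R ('rV[R]_n : normedModType R) x).
exists (e / k); first by rewrite /= divr_gt0.
move=> y /= xy; apply: le_trans (H x y) _.
by rewrite mulrC -ler_pdivlMr // ltW.
Qed.

Lemma max_lip {R : realType} (s t s' t' c : R) :
  `|s - s'| <= c -> `|t - t'| <= c -> `|Num.max s t - Num.max s' t'| <= c.
Proof.
rewrite !ler_norml => /andP[h1 h2] /andP[h3 h4].
case: (leP s t) => a; case: (leP s' t') => b; rewrite ?ler_norml; apply/andP; split; lra.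
Qed.

Lemma min_lip {R : realType} (s t s' t' c : R) :
  `|s - s'| <= c -> `|t - t'| <= c -> `|Num.min s t - Num.min s' t'| <= c.
Proof.
rewrite !ler_norml => /andP[h1 h2] /andP[h3 h4].
case: (leP s t) => a; case: (leP s' t') => b; apply/andP; split; lra.
Qed.

Set Implicit Arguments. Unset Strict Implicit.
Section Main.
Context {R : realType} {n : nat} (X : set 'rV[R]_n).
Implicit Types (f g : 'rV[R]_n -> R) (x y z p q : 'rV[R]_n).

Definition DD f := forall x y, X x -> X y -> `|x - y| <= f x + f y.
Definition star f x := sup [set `|x - y| - f y | y in X].
Definition qop f x := (f x + star f x) / 2.
Definition fk p k := iter k qop (fun x => `|x - p|).

Lemma D_ge0 f x : DD f -> X x -> 0 <= f x.
Proof. by move=> D Xx; have := D x x Xx Xx; rewrite subrr normr0 => h; lra. Qed.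

Lemma has_sup_star f x : DD f -> X x -> has_sup [set `|x - y| - f y | y in X].
Proof.
move=> D Xx; split; first by exists (`|x - x| - f x); exists x.
exists (f x) => _ [y Xy <-]; have := D x y Xx Xy; lra.
Qed.

Lemma star_ge f x y : DD f -> X x -> X y -> `|x - y| - f y <= star f x.
Proof. by move=> D Xx Xy; apply: sup_upper_bound; [exact: has_sup_star|exists y]. Qed.

Lemma star_le f x : DD f -> X x -> star f x <= f x.
Proof.
move=> D Xx; apply: ge_sup; first by exists (`|x - x| - f x); exists x.
move=> _ [y Xy <-]; have := D x y Xx Xy; lra.
Qed.

Lemma star_lip1 f g x c : DD f -> DD g -> X x ->
  (forall y, X y -> `|f y - g y| <= c) -> star f x <= star g x + c.
Proof.
move=> Df Dg Xx H; apply: ge_sup; first by exists (`|x - x| - f x); exists x.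
move=> _ [y Xy <-]; have := star_ge Dg Xx Xy; have := H y Xy.
rewrite ler_norml => /andP[h1 h2]; lra.
Qed.

Lemma star_lip f g x c : DD f -> DD g -> X x ->
  (forall y, X y -> `|f y - g y| <= c) -> `|star f x - star g x| <= c.
Proof.
move=> Df Dg Xx H; rewrite ler_norml.
have h1 := star_lip1 Df Dg Xx H.
have h2 : star g x <= star f x + c.
  by apply: star_lip1 => // y Xy; rewrite distrC; apply: H.
apply/andP; split; lra.
Qed.

Lemma star_anti f g x : DD f -> DD g -> X x ->
  (forall y, X y -> g y <= f y) -> star f x <= star g x.
Proof.
move=> Df Dg Xx H; apply: ge_sup; first by exists (`|x - x| - f x); exists x.
move=> _ [y Xy <-]; have := star_ge Dg Xx Xy; have := H y Xy; lra.
Qed.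

Lemma D_qop f : DD f -> DD (qop f).
Proof.
move=> D x y Xx Xy; rewrite /qop.
have := star_ge D Xx Xy; have := star_ge D Xy Xx; rewrite (distrC y x); lra.
Qed.

Lemma qop_le f x : DD f -> X x -> qop f x <= f x.
Proof. by move=> D Xx; have := star_le D Xx; rewrite /qop; lra. Qed.

Lemma qop_lip f g x c : DD f -> DD g -> X x ->
  (forall y, X y -> `|f y - g y| <= c) -> `|qop f x - qop g x| <= c.
Proof.
move=> Df Dg Xx H; have := star_lip Df Dg Xx H; have := H x Xx.
rewrite /qop !ler_norml => /andP[h1 h2] /andP[h3 h4]; apply/andP; split; lra.
Qed.

Lemma D_f0 p : DD (fun x => `|x - p|).
Proof. by move=> x y _ _; rewrite (distrC y p); apply: ler_distD. Qed.

Lemma D_fk p k : DD (fk p k).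
Proof. elim: k => [|k IH]; [exact: D_f0 | exact: D_qop]. Qed.

Lemma fkS p k x : fk p k.+1 x = qop (fk p k) x.
Proof. by []. Qed.

Lemma fk_mono p k m x : X x -> (k <= m)%N -> fk p m x <= fk p k x.
Proof.
move=> Xx; elim: m => [|m IH]; first by rewrite leqn0 => /eqP ->.
rewrite leq_eqVlt => /orP[/eqP -> //|]; rewrite ltnS => km.
by apply: le_trans (IH km); rewrite fkS; apply: qop_le => //; apply: D_fk.
Qed.

Lemma fk_lip p q k x : X x -> `|fk p k x - fk q k x| <= `|p - q|.
Proof.
elim: k x => [|k IH] x Xx /=.
  by apply: le_trans (ler_dist_dist _ _) _; rewrite opprB addrC addrA subrK distrC.
by apply: qop_lip => //; apply: D_fk.
Qed.

End Main.

Section Main2.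
Context {R : realType} {n : nat} (X : set 'rV[R]_n).
Implicit Types (f g : 'rV[R]_n -> R) (x y z p q : 'rV[R]_n).

Definition gX p x := inf [set fk X p k x | k in [set: nat]].

Lemma has_inf_g p x : X x -> has_inf [set fk X p k x | k in [set: nat]].
Proof.
move=> Xx; split; first by exists (fk X p 0 x); exists 0%N.
by exists 0 => _ [k _ <-]; apply: D_ge0 Xx; apply: D_fk.
Qed.

Lemma gX_le p x k : X x -> gX p x <= fk X p k x.
Proof. by move=> Xx; apply: ge_inf; [case: (has_inf_g p Xx)|exists k]. Qed.

Lemma gX_adh p x e : X x -> 0 < e -> exists k, fk X p k x < gX p x + e.
Proof.
move=> Xx e0; have [_ [k _ <-] h] := inf_adherent e0 (has_inf_g p Xx).
by exists k.
Qed.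

Lemma gX_lip1 p q x : X x -> gX p x <= gX q x + `|p - q|.
Proof.
move=> Xx; rewrite -lerBlDr; apply: lb_le_inf; first by exists (fk X q 0 x); exists 0%N.
move=> _ [k _ <-]; have := gX_le p k Xx; have := fk_lip p q k Xx.
rewrite ler_norml => /andP[h1 h2]; lra.
Qed.

Lemma gX_lip p q x : X x -> `|gX p x - gX q x| <= `|p - q|.
Proof.
move=> Xx; have h1 := gX_lip1 p q Xx; have h2 := gX_lip1 q p Xx.
rewrite distrC in h2; rewrite ler_norml; apply/andP; split; lra.
Qed.

Lemma D_gX p : DD X (gX p).
Proof.
move=> x y Xx Xy; apply/ler_addgt0Pr => e e0.
have e20 : 0 < e / 2 by rewrite divr_gt0.
have [k1 h1] := gX_adh p Xx e20; have [k2 h2] := gX_adh p Xy e20.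
have := D_fk (X := X) p (maxn k1 k2) Xx Xy.
have := fk_mono p Xx (leq_maxl k1 k2); have := fk_mono p Xy (leq_maxr k1 k2).
lra.
Qed.

Lemma star_gX p x : X x -> star X (gX p) x = gX p x.
Proof.
move=> Xx; apply/le_anti/andP; split; first by apply: star_le => //; apply: D_gX.
apply/ler_addgt0Pr => e e0.
have [k hk] := gX_adh p Xx e0.
have h1 : star X (fk X p k) x <= star X (gX p) x.
  by apply: star_anti => //; [apply: D_fk | apply: D_gX | move=> y Xy; apply: gX_le].
have h2 := gX_le p k.+1 Xx; rewrite fkS /qop in h2.
lra.
Qed.

End Main2.

Section Main3.
Context {R : realType} {n : nat} (X : set 'rV[R]_n).
Implicit Types (f g : 'rV[R]_n -> R) (x y z p q : 'rV[R]_n).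

Lemma has_sup_star_any g y x0 : DD X g -> X x0 -> has_sup [set `|y - w| - g w | w in X].
Proof.
move=> D X0; split; first by exists (`|y - x0| - g x0); exists x0.
exists (`|y - x0| + g x0) => _ [w Xw <-].
have := D x0 w X0 Xw; have := ler_distD x0 y w; lra.
Qed.

Lemma star_glip1 g y y' x0 : DD X g -> X x0 -> star X g y <= star X g y' + `|y - y'|.
Proof.
move=> D X0; apply: ge_sup; first by exists (`|y - x0| - g x0); exists x0.
move=> _ [w Xw <-].
have : `|y' - w| - g w <= star X g y'.
  by apply: sup_upper_bound; [exact: has_sup_star_any X0|exists w].
have := ler_distD y' y w; rewrite (distrC y y'); lra.
Qed.

Lemma attain p x : X x -> compact X -> exists y, X y /\ `|x - y| = gX X p x + gX X p y.
Proof.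
move=> Xx cX.
pose h y := `|x - y| - star X (gX X p) y.
have D : DD X (gX X p) := D_gX p.
have hc : continuous h.
  apply: (@lip_cont _ _ h 2) => // u v.
  have := star_glip1 u v D Xx; have := star_glip1 v u D Xx.
  have := ler_dist_dist (x - u) (x - v).
  have -> : x - u - (x - v) = v - u by rewrite opprB addrC addrA subrK.
  rewrite (distrC v u) /h => h1 h3 h4; move: h1; rewrite ler_norml => /andP[h1 h2]. rewrite ler_norml; apply/andP; split; lra.
have [|c cX' cmax] := compact_EVT_max _ cX (continuous_subspaceT (A:=X) hc).
  by exists x.
have Xc : X c by rewrite inE in cX'.
exists c; split => //.
have hcs : h c = `|x - c| - gX X p c by rewrite /h star_gX.
have h1 : gX X p x <= h c.
  rewrite -star_gX //; apply: ge_sup; first by exists (`|x - x| - gX X p x); exists x.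
  move=> _ [y Xy <-]; have := cmax y (mem_set Xy); rewrite /h star_gX //.
have h2 := D x c Xx Xc.
apply/le_anti/andP; split; lra.
Qed.

Definition lo p k := sup [set x ord0 k - gX X p x | x in X].
Definition hi p k := inf [set x ord0 k + gX X p x | x in X].
Definition rho p : 'rV[R]_n := \row_k Num.max (lo p k) (Num.min (hi p k) (p ord0 k)).

Lemma coord_le x y k : x ord0 k - y ord0 k <= `|x - y|.
Proof. by have := entry_le (x - y) k; rewrite !mxE; apply: le_trans; apply: ler_norm. Qed.

Lemma has_sup_lo p k x0 : X x0 -> has_sup [set x ord0 k - gX X p x | x in X].
Proof.
move=> X0; split; first by exists (x0 ord0 k - gX X p x0); exists x0.
exists (x0 ord0 k + gX X p x0) => _ [x Xx <-].
have := D_gX p Xx X0; have := coord_le x x0 k; lra.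
Qed.

Lemma has_inf_hi p k x0 : X x0 -> has_inf [set x ord0 k + gX X p x | x in X].
Proof.
move=> X0; split; first by exists (x0 ord0 k + gX X p x0); exists x0.
exists (x0 ord0 k - gX X p x0) => _ [x Xx <-].
have := D_gX p X0 Xx; have := coord_le x0 x k; lra.
Qed.

Lemma lo_ge p k x : X x -> x ord0 k - gX X p x <= lo p k.
Proof. by move=> Xx; apply: sup_upper_bound; [exact: has_sup_lo Xx|exists x]. Qed.

Lemma hi_le p k x : X x -> hi p k <= x ord0 k + gX X p x.
Proof. by move=> Xx; apply: ge_inf; [case: (has_inf_hi p k Xx)|exists x]. Qed.

Lemma lo_le_hi p k x0 : X x0 -> lo p k <= hi p k.
Proof.
move=> X0; apply: ge_sup; first by exists (x0 ord0 k - gX X p x0); exists x0.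
move=> _ [x Xx <-]; apply: lb_le_inf; first by exists (x0 ord0 k + gX X p x0); exists x0.
move=> _ [y Xy <-]; have := D_gX p Xx Xy; have := coord_le x y k; lra.
Qed.

Lemma rho_box p x : X x -> `|x - rho p| <= gX X p x.
Proof.
move=> Xx; apply: norm_le_entries; first by apply: D_ge0 Xx; apply: D_gX.
move=> k; rewrite !mxE.
have h1 := lo_ge p k Xx; have h2 := hi_le p k Xx; have h3 := lo_le_hi p k Xx.
have h4 : lo p k <= Num.max (lo p k) (Num.min (hi p k) (p ord0 k)) by rewrite le_max lexx.
have h5 : Num.max (lo p k) (Num.min (hi p k) (p ord0 k)) <= hi p k.
  by rewrite ge_max h3 ge_min lexx.
rewrite ler_norml; apply/andP; split; lra.
Qed.

End Main3.

Section Main4.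
Context {R : realType} {n : nat} (X : set 'rV[R]_n).
Implicit Types (f g : 'rV[R]_n -> R) (x y z p q : 'rV[R]_n).

Lemma lo_lip1 p q k x0 : X x0 -> lo X p k <= lo X q k + `|p - q|.
Proof.
move=> X0; apply: ge_sup; first by exists (x0 ord0 k - gX X p x0); exists x0.
move=> _ [x Xx <-]; have := lo_ge q k Xx; have := gX_lip p q Xx.
rewrite ler_norml => /andP[h1 h2]; lra.
Qed.

Lemma hi_lip1 p q k x0 : X x0 -> hi X p k <= hi X q k + `|p - q|.
Proof.
move=> X0; rewrite -lerBlDr; apply: lb_le_inf; first by exists (x0 ord0 k + gX X q x0); exists x0.
move=> _ [x Xx <-]; have := hi_le p k Xx; have := gX_lip p q Xx.
rewrite ler_norml => /andP[h1 h2]; lra.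
Qed.

Lemma rho_lip p q x0 : X x0 -> `|rho X p - rho X q| <= `|p - q|.
Proof.
move=> X0; apply: norm_le_entries => // k; rewrite !mxE.
have h1 := lo_lip1 p q k X0; have h2 := lo_lip1 q p k X0.
have h3 := hi_lip1 p q k X0; have h4 := hi_lip1 q p k X0.
rewrite (distrC q p) in h2 h4.
have h5 := entry_le (p - q) k; rewrite !mxE in h5.
apply: max_lip; first by rewrite ler_norml; apply/andP; split; lra.
apply: min_lip => //; rewrite ler_norml; apply/andP; split; lra.
Qed.

Lemma rho_E p : compact X -> Emin X (rho X p).
Proof.
move=> cX x Xx; have [y [Xy hxy]] := attain p Xx cX; exists y; split => //.
rewrite /dinf; have h1 := rho_box p Xx; have h2 := rho_box p Xy.
rewrite (distrC y) in h2; have h3 := ler_distD (rho X p) x y.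
apply/le_anti/andP; split; lra.
Qed.

Lemma star_ext f g x : (forall y, X y -> f y = g y) -> star X f x = star X g x.
Proof.
move=> H; rewrite /star; congr sup; apply/seteqP; split => _ [y Xy <-]; exists y => //;
by rewrite H.
Qed.

Lemma rho_fix z x0 : X x0 -> Emin X z -> rho X z = z.
Proof.
move=> X0 Ez.
have sd x : X x -> star X (fun y => `|y - z|) x = `|x - z|.
  move=> Xx; apply/le_anti/andP; split.
    apply: ge_sup; first by exists (`|x - x| - `|x - z|); exists x.
    by move=> _ [y Xy <-]; have := ler_distD z x y; rewrite (distrC z y); lra.
  have [y [Xy]] := Ez x Xx; rewrite /dinf (distrC z y) => hy.
  have -> : `|x - z| = `|x - y| - `|y - z| by lra.
  apply: sup_upper_bound; last by exists y.
  by apply: has_sup_star => //; apply: D_f0.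
have fz k x : X x -> fk X z k x = `|x - z|.
  elim: k x => [|k IH] x Xx //.
  rewrite fkS /qop (star_ext _ IH) sd // IH //; lra.
have gz x : X x -> gX X z x = `|x - z|.
  move=> Xx; apply/le_anti/andP; split; first by have := gX_le z 0 Xx.
  apply: lb_le_inf; first by exists (fk X z 0 x); exists 0%N.
  by move=> _ [k _ <-]; rewrite fz.
apply/rowP => k; rewrite mxE.
have h1 : lo X z k <= z ord0 k.
  apply: ge_sup; first by exists (x0 ord0 k - gX X z x0); exists x0.
  by move=> _ [x Xx <-]; rewrite gz //; have := coord_le x z k; lra.
have h2 : z ord0 k <= hi X z k.
  apply: lb_le_inf; first by exists (x0 ord0 k + gX X z x0); exists x0.
  by move=> _ [x Xx <-]; rewrite gz // distrC; have := coord_le z x k; lra.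
by rewrite min_r // max_r.
Qed.

End Main4.

Lemma entryB {R : realType} {n : nat} (a b : 'rV[R]_n) k :
  (a - b) ord0 k = a ord0 k - b ord0 k.
Proof. by rewrite !mxE. Qed.

Lemma retract_inj {R : realType} {n : nat} (E : set 'rV[R]_n) (r : 'rV[R]_n -> 'rV[R]_n) :
  (forall p, E (r p)) -> (forall p q, `|r p - r q| <= `|p - q|) ->
  (forall z, E z -> r z = z) -> injective_space E.
Proof.
move=> rE rL rF Y Yt dY dYt i f mY [H0 [Hs Ht]] iso fE fL.
have d00 u : dYt u u = 0 by apply/(H0 u u).
have dge0 u v : 0 <= dYt u v.
  by have := Ht u v u; rewrite (Hs v u) d00 => h; lra.
case: (pselect (exists a : Y, True)) => [[a0 _]|nY]; last first.
  exists (fun _ => r 0); split => //; split.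
    by move=> u v; rewrite /dinf subrr normr0.
  by move=> a; exfalso; apply: nY; exists a.
pose h u : 'rV[R]_n := \row_k inf [set f a ord0 k + dYt u (i a) | a in [set: Y]].
have hinf u k : has_inf [set f a ord0 k + dYt u (i a) | a in [set: Y]].
  split; first by exists (f a0 ord0 k + dYt u (i a0)); exists a0.
  exists (f a0 ord0 k - dYt u (i a0)) => _ [a _ <-].
  have := coord_le (f a0) (f a) k; have := fL a0 a; rewrite -iso.
  have := Ht (i a0) u (i a); rewrite (Hs (i a0) u) /dinf; lra.
have h_le u k a : h u ord0 k <= f a ord0 k + dYt u (i a).
  by rewrite mxE; apply: ge_inf; [case: (hinf u k)|exists a].
have h_i b : h (i b) = f b.
  apply/rowP => k; apply/le_anti/andP; split.
    by have := h_le (i b) k b; rewrite d00 addr0.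
  rewrite mxE; apply: lb_le_inf; first by exists (f a0 ord0 k + dYt (i b) (i a0)); exists a0.
  move=> _ [a _ <-]; have := coord_le (f b) (f a) k; have := fL b a; rewrite -iso /dinf.
  lra.
have h_lip u v k : h u ord0 k <= h v ord0 k + dYt u v.
  rewrite -lerBlDr [X in _ <= X]mxE; apply: lb_le_inf.
    by exists (f a0 ord0 k + dYt v (i a0)); exists a0.
  move=> _ [a _ <-]; have := h_le u k a; have := Ht u v (i a); lra.
exists (fun u => r (h u)); split => //; split; last first.
  by move=> a; rewrite h_i rF.
move=> u v; rewrite /dinf; apply: le_trans (rL _ _) _.
apply: norm_le_entries => // k; rewrite entryB ler_norml.
have := h_lip u v k; have := h_lip v u k; rewrite (Hs v u) => h1 h2.
apply/andP; split; lra.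
Qed.

Lemma dinf_metric {R : realType} {n : nat} : is_metric (@dinf R n).
Proof.
rewrite /dinf; split; last split.
- move=> x y; split => [/normr0_eq0/eqP|->]; last by rewrite subrr normr0.
  by rewrite subr_eq0 => /eqP.
- by move=> x y; rewrite distrC.
- by move=> x y z; apply: ler_distD.
Qed.

Lemma inj_Emin {R : realType} {n : nat} (Q : set 'rV[R]_n) :
  injective_space Q -> Q = Emin Q.
Proof.
move=> HQ.
pose Y := {x : 'rV[R]_n | Q x}.
have mY : is_metric (fun a b : Y => dinf (sval a) (sval b)).
  have [H0 [Hs Ht]] := @dinf_metric R n.
  split; last split.
  - move=> [a Qa] [b Qb] /=; split => [/H0 e|[->]]; last by apply/H0.
    by subst b; congr exist; apply: Prop_irrelevance.
  - by move=> a b; apply: Hs.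
  - by move=> a b c; apply: Ht.
have [g [gQ [gL gi]]] := HQ Y 'rV[R]_n _ _ sval sval mY dinf_metric
  (fun _ _ => erefl) (fun a => svalP a) (fun _ _ => lexx _).
apply/seteqP; split.
  by move=> z Qz x Qx; exists z; split => //; rewrite /dinf subrr normr0 addr0.
move=> z Ez; have Qw := gQ z; have [y [Qy hy]] := Ez (g z) Qw.
have gy : g y = y := gi (exist _ y Qy).
have := gL z y; rewrite gy => hl.
have : dinf (g z) z <= 0 by lra.
by rewrite /dinf normr_le0 subr_eq0 => /eqP e; rewrite -e.
Qed.

Lemma Emin_inj {R : realType} {n : nat} (X : set 'rV[R]_n) :
  compact X -> injective_space (Emin X).
Proof.
move=> cX; case: (pselect (X !=set0)) => [[x0 X0]|nX].
  apply: (@retract_inj R n (Emin X) (rho X)).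
  - by move=> p; apply: rho_E.
  - by move=> p q; apply: rho_lip X0.
  - by move=> z Ez; apply: rho_fix X0 Ez.
apply: (@retract_inj R n (Emin X) id) => //.
by move=> p x Xx; exfalso; apply: nX; exists x.
Qed.

Unset Implicit Arguments.

Theorem proposition5p15 (R : realType) (n : nat) :
  (forall Q : set 'rV[R]_n, compact Q -> (injective_space Q <-> Q = Emin Q)) /\
  (forall X : set 'rV[R]_n, compact X -> injective_space (Emin X)).
Proof.
split; last exact: Emin_inj.
move=> Q cQ; split; first exact: inj_Emin.
by move=> EQ; rewrite EQ; apply: Emin_inj.
Qed.
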